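(* Consider the algorithm described in the context, suppose it does not terminate finitely, and suppose there is $\sigma_{\min}>0$ with $\sigma_{\min}(J_k)\ge\sigma_{\min}$ for all $k\in\mathbb{N}$. Then for all $k\in\mathbb{N}$, $\tau_{k,\mathrm{trial}}\ge\tau_{\min,\mathrm{trial}}$, where, with $K:=2\kappa_v\kappa_{\nabla c}\big(\kappa_{\nabla f}+\kappa_{\partial r}+\bar\sigma_u\kappa_c\kappa_v\kappa_{\nabla c}\big)$, $$\tau_{\min,\mathrm{trial}}:=\min\Big\{\frac{(1-\sigma_c)\kappa_v\sigma_{\min}^2}{K},\ \frac{(1-\sigma_c)(\sigma_{\min}/\kappa_{\nabla c})^2}{K\alpha_0}\Big\},$$ and consequently $\tau_k\ge\tau_{\min}:=\min\{\tau_0,(1-\epsilon_\tau)\tau_{\min,\mathrm{trial}}\}$ for all $k\in\mathbb{N}$.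
   Context: Problem: $\min_{x\in\mathbb{R}^n} f(x)+r(x)$ subject to $c(x)=0$, where $f:\mathbb{R}^n\to\mathbb{R}$ and $c:\mathbb{R}^n\to\mathbb{R}^m$ ($m\le n$) are continuously differentiable and $r:\mathbb{R}^n\to\mathbb{R}_{\ge 0}$ is convex. Write $g(x)=\nabla f(x)$, $J(x)=\nabla c(x)^T$, and $f_k=f(x_k)$, $g_k=g(x_k)$, $c_k=c(x_k)$, $J_k=J(x_k)$, $r_k=r(x_k)$. All norms are Euclidean (spectral norm for matrices). Merit function: $\Phi_\tau(x)=\tau(f(x)+r(x))+\|c(x)\|_2$. Algorithm: inputs $x_0$, $\alpha_0>0$, $\tau_{-1}>0$; constants $\kappa_v>0$, $\sigma_c,\epsilon_\tau,\xi,\eta\in(0,1)$, $\sigma_u\in(0,1/2]$, $\bar\sigma_u:=\sigma_u+\tfrac12$. For $k=0,1,\dots$: 1. If $J_k^Tc_k\ne0$, compute $v_k$ with $v_k\in\mathrm{Range}(J_k^T)$, $\|v_k\|_2\le\kappa_v\alpha_k\|J_k^Tc_k\|_2$, $\|c_k+J_kv_k\|_2\le\|c_k+J_kv_k^c\|_2$, where $v_k^c=-\beta_k^cJ_k^Tc_k$ with $\beta_k^c$ minimizing $\tfrac12\|c_k-\beta J_kJ_k^Tc_k\|_2^2$ over $0\le\beta\le\kappa_v\alpha_k$. Otherwise set $v_k=0$, and if $c_k\ne0$ terminate. 2. Let $u_k$ be the unique minimizer of $g_k^Tu+\tfrac1{2\alpha_k}\|u\|_2^2+r(x_k+v_k+u)$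 subject to $J_ku=0$; set $s_k=v_k+u_k$. If $s_k=0$, terminate. 3. Let $D_k:=g_k^Ts_k+\bar\sigma_u\|s_k\|_2^2/\alpha_k+r(x_k+s_k)-r_k$; $\tau_{k,\mathrm{trial}}=\infty$ if $D_k\le0$, else $\tau_{k,\mathrm{trial}}=(1-\sigma_c)(\|c_k\|_2-\|c_k+J_kv_k\|_2)/D_k$. Set $\tau_k=\tau_{k-1}$ if $\tau_{k-1}\le\tau_{k,\mathrm{trial}}$, else $\tau_k=\min\{(1-\epsilon_\tau)\tau_{k-1},\tau_{k,\mathrm{trial}}\}$. 4. With $\Delta q_k(s,\tau):=-\tau(g_k^Ts+\tfrac1{2\alpha_k}\|s\|_2^2+r(x_k+s)-r_k)+\|c_k\|_2-\|c_k+J_ks\|_2$: if $\Phi_{\tau_k}(x_k+s_k)\le\Phi_{\tau_k}(x_k)-\eta\Delta q_k(s_k,\tau_k)$ set $x_{k+1}=x_k+s_k$, $\alpha_{k+1}=\alpha_k$; else $x_{k+1}=x_k$, $\alpha_{k+1}=\xi\alpha_k$. Standing assumption: there is an open convex set $\mathcal X$ containing all iterates $x_k$ and trial points $x_k+s_k$, and positive constants such that for all $x\in\mathcal X$: $f$ is bounded below, $\|\nabla f(x)\|_2\le\kappa_{\nabla f}$, $\|c(x)\|_2\le\kappa_c$, $\|J(x)\|_2\le\kappa_{\nabla c}$, every $w\in\partial r(x)$ has $\|w\|_2\le\kappa_{\partial r}$; and $\nabla f$, $J$ are Lipschitz continuous on $\mathcal X$. *)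

(* Defs.v *)
From HB Require Import structures.
From mathcomp Require Import all_boot all_order all_algebra.
From mathcomp Require Import all_classical all_reals all_analysis.
Set Implicit Arguments. Unset Strict Implicit. Unset Printing Implicit Defensive.
Import Order.TTheory GRing.Theory Num.Theory.
Import numFieldNormedType.Exports.
Local Open Scope classical_set_scope.
Local Open Scope ring_scope.

Section Defs.
Context {R : realType}.

Definition dotv {n : nat} (u v : 'cV[R]_n) : R := \sum_i u i 0 * v i 0.
Definition enorm {n : nat} (v : 'cV[R]_n) : R := Num.sqrt (dotv v v).

Definition specnorm {m n : nat} (A : 'M[R]_(m, n)) : R :=
  sup [set enorm (A *m v) | v in [set v : 'cV[R]_n | enorm v <= 1]].

(* smallest singular value of A : 'M_(m,n) with m <= n, via its variational
   characterization min_{||y||_2 = 1} ||A^T y||_2 *)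
Definition sigma_min {m n : nat} (A : 'M[R]_(m, n)) : R :=
  inf [set enorm (A^T *m y) | y in [set y : 'cV[R]_m | enorm y = 1]].

Definition alg_convex_set {n : nat} (X : set 'cV[R]_n) : Prop :=
  forall x y t, X x -> X y -> 0 <= t <= 1 -> X ((1 - t) *: x + t *: y).
Definition alg_convex_fun {n : nat} (r : 'cV[R]_n -> R) : Prop :=
  forall x y t, 0 <= t <= 1 ->
    r ((1 - t) *: x + t *: y) <= (1 - t) * r x + t * r y.

Definition subgrad {n : nat} (r : 'cV[R]_n -> R) (x w : 'cV[R]_n) : Prop :=
  forall y, r x + dotv w (y - x) <= r y.

Definition alg_lipschitz_on {n p q : nat} (X : set 'cV[R]_n)
    (F : 'cV[R]_n -> 'M[R]_(p, q)) (norm : 'M[R]_(p, q) -> R) : Prop :=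
  exists L : R, forall x y, X x -> X y -> norm (F x - F y) <= L * enorm (x - y).

Definition merit {n m : nat} (f r : 'cV[R]_n -> R) (c : 'cV[R]_n -> 'cV[R]_m)
  (tau : R) (x : 'cV[R]_n) : R := tau * (f x + r x) + enorm (c x).

Definition Delta_q {n m : nat} (r : 'cV[R]_n -> R) (alpha : R)
  (xk gk : 'cV[R]_n) (ck : 'cV[R]_m) (Jk : 'M[R]_(m, n)) (s : 'cV[R]_n) (tau : R) : R :=
  - tau * (dotv gk s + (2 * alpha)^-1 * enorm s ^+ 2 + r (xk + s) - r xk)
  + enorm ck - enorm (ck + Jk *m s).

Definition D_k {n m : nat} (r : 'cV[R]_n -> R) (sigma_u_bar alpha : R)
  (xk gk sk : 'cV[R]_n) : R :=
  dotv gk sk + sigma_u_bar * enorm sk ^+ 2 / alpha + r (xk + sk) - r xk.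

Definition tau_trial_of {n m : nat} (r : 'cV[R]_n -> R) (sigma_c sigma_u_bar alpha : R)
  (xk gk vk sk : 'cV[R]_n) (ck : 'cV[R]_m) (Jk : 'M[R]_(m, n)) : \bar R :=
  let D := @D_k n m r sigma_u_bar alpha xk gk sk in
  if D <= 0 then +oo%E
  else ((1 - sigma_c) * (enorm ck - enorm (ck + Jk *m vk)) / D)%:E.

Definition tau_update (eps_tau tau_prev : R) (ttrial : \bar R) : R :=
  if (tau_prev%:E <= ttrial)%E then tau_prev
  else Num.min ((1 - eps_tau) * tau_prev) (fine ttrial).

(* A non-terminating run of the algorithm: sequences x, alpha, tau, v, u
   (with s_k = v_k + u_k) satisfying steps 1-4 for every k, with no
   termination ever triggered. *)
Definition algorithm_run {n m : nat}
  (f r : 'cV[R]_n -> R) (g : 'cV[R]_n -> 'cV[R]_n)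
  (c : 'cV[R]_n -> 'cV[R]_m) (J : 'cV[R]_n -> 'M[R]_(m, n))
  (kappa_v sigma_c eps_tau xi eta sigma_u tau_m1 : R)
  (x : nat -> 'cV[R]_n) (alpha tau : nat -> R) (v u : nat -> 'cV[R]_n) : Prop :=
  let sigma_u_bar := sigma_u + 2^-1 in
  forall k : nat,
  let xk := x k in let gk := g xk in let ck := c xk in let Jk := J xk in
  let sk := v k + u k in
  let tau_prev := if k is k'.+1 then tau k' else tau_m1 in
  (Jk^T *m ck != 0 ->
     (exists y : 'cV[R]_m, v k = Jk^T *m y) /\
     enorm (v k) <= kappa_v * alpha k * enorm (Jk^T *m ck) /\
     (exists beta_c : R,
        0 <= beta_c <= kappa_v * alpha k /\
        (forall beta, 0 <= beta <= kappa_v * alpha k ->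
           2^-1 * enorm (ck - beta *: (Jk *m Jk^T *m ck)) ^+ 2
           >= 2^-1 * enorm (ck - beta_c *: (Jk *m Jk^T *m ck)) ^+ 2) /\
        enorm (ck + Jk *m v k) <= enorm (ck + Jk *m (- beta_c *: (Jk^T *m ck))))) /\
  (Jk^T *m ck = 0 -> v k = 0 /\ ck = 0 (* otherwise the algorithm terminates *)) /\
  (Jk *m u k = 0 /\
   forall w : 'cV[R]_n, Jk *m w = 0 ->
     dotv gk (u k) + (2 * alpha k)^-1 * enorm (u k) ^+ 2 + r (xk + v k + u k)
     <= dotv gk w + (2 * alpha k)^-1 * enorm w ^+ 2 + r (xk + v k + w)) /\
  sk != 0 (* no termination at step 2 *) /\
  tau k = tau_update eps_tau tau_prev
            (@tau_trial_of n m r sigma_c sigma_u_bar (alpha k) xk gk (v k) sk ck Jk) /\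
  (if merit f r c (tau k) (xk + sk)
        <= merit f r c (tau k) xk - eta * Delta_q r (alpha k) xk gk ck Jk sk (tau k)
   then x k.+1 = xk + sk /\ alpha k.+1 = alpha k
   else x k.+1 = xk /\ alpha k.+1 = xi * alpha k).

End Defs.

(* Main.v *)
Require Import Defs.
From HB Require Import structures.
From mathcomp Require Import all_boot all_order all_algebra.
From mathcomp Require Import all_classical all_reals all_analysis.
From mathcomp Require Import ring lra.
Import Order.TTheory GRing.Theory Num.Theory.
Import numFieldNormedType.Exports.
Local Open Scope classical_set_scope.
Local Open Scope ring_scope.
Section Lin.
Context {R : realType}.

Lemma dotvC {n} (u v : 'cV[R]_n) : dotv u v = dotv v u.
Proof. by apply: eq_bigr => i _; rewrite mulrC. Qed.
Lemma dotvDl {n} (u v w : 'cV[R]_n) : dotv (u + v) w = dotv u w + dotv v w.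
Proof. by rewrite /dotv -big_split; apply: eq_bigr => i _; rewrite !mxE mulrDl. Qed.
Lemma dotvDr {n} (u v w : 'cV[R]_n) : dotv w (u + v) = dotv w u + dotv w v.
Proof. by rewrite dotvC dotvDl !(dotvC w). Qed.
Lemma dotvZl {n} a (u w : 'cV[R]_n) : dotv (a *: u) w = a * dotv u w.
Proof. by rewrite /dotv mulr_sumr; apply: eq_bigr => i _; rewrite !mxE mulrA. Qed.
Lemma dotvZr {n} a (u w : 'cV[R]_n) : dotv w (a *: u) = a * dotv w u.
Proof. by rewrite dotvC dotvZl dotvC. Qed.
Lemma dotvNl {n} (u w : 'cV[R]_n) : dotv (- u) w = - dotv u w.
Proof. by rewrite -scaleN1r dotvZl mulN1r. Qed.
Lemma dotvNr {n} (u w : 'cV[R]_n) : dotv w (- u) = - dotv w u.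
Proof. by rewrite dotvC dotvNl dotvC. Qed.
Lemma dotvBl {n} (u v w : 'cV[R]_n) : dotv (u - v) w = dotv u w - dotv v w.
Proof. by rewrite dotvDl dotvNl. Qed.
Lemma dotvBr {n} (u v w : 'cV[R]_n) : dotv w (u - v) = dotv w u - dotv w v.
Proof. by rewrite dotvDr dotvNr. Qed.
Lemma dotv0l {n} (w : 'cV[R]_n) : dotv 0 w = 0.
Proof. by rewrite /dotv big1 // => i _; rewrite mxE mul0r. Qed.
Lemma dotv0r {n} (w : 'cV[R]_n) : dotv w 0 = 0.
Proof. by rewrite dotvC dotv0l. Qed.
Lemma dotv_ge0 {n} (u : 'cV[R]_n) : 0 <= dotv u u.
Proof. by apply: sumr_ge0 => i _; rewrite -expr2 sqr_ge0. Qed.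
Lemma dotv_eq0 {n} (u : 'cV[R]_n) : dotv u u = 0 -> u = 0.
Proof.
move=> /eqP; rewrite psumr_eq0; last by move=> i _; rewrite -expr2 sqr_ge0.
move=> /allP H; apply/matrixP => i j; rewrite (ord1 j) mxE.
by have := H i (mem_index_enum i); rewrite implyTb mulf_eq0 orbb => /eqP.
Qed.
Lemma enorm_ge0 {n} (u : 'cV[R]_n) : 0 <= enorm u.
Proof. exact: sqrtr_ge0. Qed.
Lemma enorm_sq {n} (u : 'cV[R]_n) : enorm u ^+ 2 = dotv u u.
Proof. by rewrite sqr_sqrtr // dotv_ge0. Qed.
Lemma enorm_eq0 {n} (u : 'cV[R]_n) : enorm u = 0 -> u = 0.
Proof. by move=> H; apply: dotv_eq0; rewrite -enorm_sq H expr0n. Qed.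
Lemma enorm0 {n} : enorm (0 : 'cV[R]_n) = 0.
Proof. by rewrite /enorm dotv0l sqrtr0. Qed.
Lemma enormZ {n} a (u : 'cV[R]_n) : enorm (a *: u) = `|a| * enorm u.
Proof.
by rewrite /enorm dotvZl dotvZr mulrA -expr2 sqrtrM ?sqr_ge0 // sqrtr_sqr.
Qed.
Lemma enormN {n} (u : 'cV[R]_n) : enorm (- u) = enorm u.
Proof. by rewrite -scaleN1r enormZ normrN1 mul1r. Qed.

Lemma CS {n} (u v : 'cV[R]_n) : dotv u v <= enorm u * enorm v.
Proof.
set a := enorm v; set b := enorm u.
have H := dotv_ge0 (a *: u - b *: v).
rewrite !(dotvBl, dotvBr, dotvZl, dotvZr) -!enorm_sq -/a -/b (dotvC v u) in H.
have a0 : 0 <= a by exact: enorm_ge0.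
have b0 : 0 <= b by exact: enorm_ge0.
have [ab0|ab0] := eqVneq (b * a) 0.
  move/eqP: ab0; rewrite mulf_eq0 => /orP[/eqP|/eqP] H0.
    by rewrite (enorm_eq0 _ H0) dotv0l mulr_ge0 // enorm_ge0.
  by rewrite (enorm_eq0 _ H0) dotv0r mulr_ge0 // enorm_ge0.
have abp : 0 < b * a by rewrite lt_def ab0 mulr_ge0.
rewrite -(ler_pM2l abp); nra.
Qed.

Lemma CS_abs {n} (u v : 'cV[R]_n) : `|dotv u v| <= enorm u * enorm v.
Proof.
case: (lerP 0 (dotv u v)) => H.
  by rewrite ger0_norm // CS.
by rewrite ltr0_norm // -dotvNl -(enormN u) CS.
Qed.

Lemma dotv_mx {m n} (A : 'M[R]_(m, n)) y u :
  dotv (A^T *m y) u = dotv y (A *m u).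
Proof.
rewrite /dotv.
under eq_bigr => i _ do rewrite mxE mulr_suml.
rewrite exchange_big /=; apply: eq_bigr => j _.
rewrite mxE mulr_sumr; apply: eq_bigr => i _; rewrite !mxE; ring.
Qed.


Lemma dotv_delta {n} (i0 : 'I_n) (d : 'cV[R]_n) : dotv (delta_mx i0 0) d = d i0 0.
Proof.
rewrite /dotv (bigD1 i0) //= big1 => [|j /negbTE Hj]; last by rewrite mxE Hj mul0r.
by rewrite mxE !eqxx mul1r addr0.
Qed.

Definition supp {n} (k : nat) (d : 'cV[R]_n) := forall i : 'I_n, (k <= i)%N -> d i 0 = 0.

Lemma hb {n} (phi : 'cV[R]_n -> R) : alg_convex_fun phi -> phi 0 = 0 ->
  forall k, (k <= n)%N -> exists w, forall d, supp k d -> dotv w d <= phi d.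
Proof.
move=> conv phi0; elim=> [_|k IH Hk].
  exists 0 => d Hd; have -> : d = 0.
    by apply/matrixP => i j; rewrite (ord1 j) mxE; apply: Hd.
  by rewrite dotv0l phi0.
have [w Hw] := IH (ltnW Hk).
set ik := Ordinal Hk.
set e : 'cV[R]_n := delta_mx ik 0.
have key : forall d d' s t, supp k d -> supp k d' -> 0 < s -> 0 < t ->
    t * dotv w d' + s * dotv w d <= t * phi (d' - s *: e) + s * phi (d + t *: e).
  move=> d d' s t Hd Hd' s0 t0.
  have st0 : 0 < s + t by rewrite addr_gt0.
  set l := s / (s + t).
  have l0 : 0 <= l <= 1.
    apply/andP; split; first by apply: divr_ge0; apply: ltW.
    by rewrite /l ler_pdivrMr // mul1r lerDl ltW.
  have E1 : (1 - l) * (s + t) = t by rewrite /l; field; rewrite gt_eqF.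
  have E2 : l * (s + t) = s by rewrite /l; field; rewrite gt_eqF.
  have Ev' : forall e : 'cV[R]_n, (1 - l) *: (d' - s *: e) + l *: (d + t *: e) = (1 - l) *: d' + l *: d.
    move=> {}e; have E3 : l * t = (1 - l) * s by rewrite /l; field; rewrite gt_eqF.
    apply/matrixP => i j; rewrite !mxE.
    transitivity ((1 - l) * d' i j + l * d i j + (l * t - (1 - l) * s) * e i j).
      ring.
    by rewrite E3 subrr mul0r addr0.
  have Hs : supp k ((1 - l) *: d' + l *: d).
    by move=> i Hi; rewrite !mxE Hd // Hd' // !mulr0 addr0.
  have := conv (d' - s *: e) (d + t *: e) l l0; rewrite Ev' => H1.
  have := Hw _ Hs; rewrite dotvDr !dotvZr => H2.
  have H3 := le_trans H2 H1.
  have EE : forall A B : R, t * A + s * B = (s + t) * ((1 - l) * A + l * B).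
    move=> A B; transitivity (((1 - l) * (s + t)) * A + (l * (s + t)) * B).
      by rewrite E1 E2.
    ring.
  by rewrite !EE ler_pM2l.
pose L := [set x | exists d' s, supp k d' /\ 0 < s /\
              x = (dotv w d' - phi (d' - s *: e)) / s].
have supp0 : supp k (0 : 'cV[R]_n) by move=> i _; rewrite mxE.
have L0 : L !=set0.
  by exists ((dotv w 0 - phi (0 - 1 *: e)) / 1); exists 0, 1; rewrite ltr01.
have Lub : forall d t, supp k d -> 0 < t -> ubound L ((phi (d + t *: e) - dotv w d) / t).
  move=> d t Hd t0 x [d' [s [Hd' [s0 ->]]]].
  rewrite ler_pdivrMr // mulrAC ler_pdivlMr //.
  have := key d d' s t Hd Hd' s0 t0; lra.
have hasL : has_sup L.
  by split => //; exists ((phi (0 + 1 *: e) - dotv w 0) / 1); apply: Lub => //; rewrite ltr01.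
set a := sup L.
have Ha1 : forall d' s, supp k d' -> 0 < s -> (dotv w d' - phi (d' - s *: e)) / s <= a.
  by move=> d' s Hd' s0; apply: sup_upper_bound => //; exists d', s.
have Ha2 : forall d t, supp k d -> 0 < t -> a <= (phi (d + t *: e) - dotv w d) / t.
  by move=> d t Hd t0; apply: ge_sup => //; apply: Lub.
exists (w + (a - w ik 0) *: e) => d Hd.
set t := d ik 0.
set d0 := d - t *: e.
have Hd0 : supp k d0.
  move=> i Hi; rewrite !mxE.
  have [->|Hne] := eqVneq i ik; first by rewrite eqxx mulr1 subrr.
  rewrite Hd; last by rewrite ltn_neqAle Hi andbT; apply: contra Hne => /eqP Hi'; apply/eqP/val_inj.
  by rewrite mulr0 subrr.
have Edot : dotv (w + (a - w ik 0) *: e) d = dotv w d0 + t * a.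
  rewrite dotvDl dotvZl dotv_delta /d0 dotvBr dotvZr (dotvC w e) dotv_delta -/t; ring.
rewrite Edot.
have Ed : d = d0 + t *: e by rewrite /d0 subrK.
case: (ltgtP 0 t) => [t0|t0|t0].
- have := Ha2 d0 t Hd0 t0; rewrite -Ed ler_pdivlMr // => H; lra.
- have s0 : 0 < - t by rewrite oppr_gt0.
  have := Ha1 d0 (- t) Hd0 s0; rewrite scaleNr opprK -Ed ler_pdivrMr // => H; lra.
- rewrite -t0 mul0r addr0.
  have Ed0 : d0 = d by rewrite /d0 -t0 scale0r subr0.
  by rewrite -Ed0; apply: Hw.
Qed.

Lemma subgrad_exists {n} (r : 'cV[R]_n -> R) : alg_convex_fun r ->
  forall y, exists w, subgrad r y w.
Proof.
move=> conv y.
pose phi d := r (y + d) - r y.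
have cphi : alg_convex_fun phi.
  move=> a b l Hl; rewrite /phi.
  have -> : y + ((1 - l) *: a + l *: b) = (1 - l) *: (y + a) + l *: (y + b).
    by rewrite !scalerDr addrACA -scalerDl subrK scale1r.
  have := conv (y + a) (y + b) l Hl; lra.
have phi0 : phi 0 = 0 by rewrite /phi addr0 subrr.
have [w Hw] := hb phi cphi phi0 n (leqnn n).
have Hs : forall d : 'cV[R]_n, supp n d by move=> d i Hi; move: (ltn_ord i); rewrite ltnNge Hi.
exists w => z; have := Hw (z - y) (Hs _).
by rewrite /phi (addrC y) subrK; lra.
Qed.


Lemma mx_bound {m n} (A : 'M[R]_(m, n)) v :
  enorm (A *m v) ^+ 2 <= (\sum_i \sum_j A i j ^+ 2) * enorm v ^+ 2.
Proof.
rewrite enorm_sq /dotv mulr_suml; apply: ler_sum => i _.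
pose ri : 'cV[R]_n := (row i A)^T.
have E1 : (A *m v) i 0 = dotv ri v.
  by rewrite mxE /dotv; apply: eq_bigr => j _; rewrite !mxE.
have E2 : \sum_j A i j ^+ 2 = enorm ri ^+ 2.
  by rewrite enorm_sq /dotv; apply: eq_bigr => j _; rewrite !mxE expr2.
rewrite -expr2 E1 E2 -exprMn -real_normK ?num_real //.
apply: lerXn2r; rewrite ?nnegrE ?normr_ge0 ?mulr_ge0 ?enorm_ge0 //.
exact: CS_abs.
Qed.

Lemma specnorm_bound {m n} (A : 'M[R]_(m, n)) z :
  enorm (A *m z) <= specnorm A * enorm z.
Proof.
set S := [set enorm (A *m v) | v in [set v : 'cV[R]_n | enorm v <= 1]].
have hS : has_sup S.
  split; first by exists (enorm (A *m 0)); exists 0 => //=; rewrite enorm0 ler01.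
  exists (Num.sqrt (\sum_i \sum_j A i j ^+ 2)) => x [v /= Hv <-].
  rewrite -(ger0_norm (enorm_ge0 (A *m v))) -sqrtr_sqr.
  apply: ler_wsqrtr; apply: le_trans (mx_bound A v) _.
  have F0 : 0 <= \sum_i \sum_j A i j ^+ 2.
    by apply: sumr_ge0 => i _; apply: sumr_ge0 => j _; apply: sqr_ge0.
  have v1 : enorm v ^+ 2 <= 1 by rewrite expr_le1 // enorm_ge0.
  by rewrite ler_piMr.
have [z0|z0] := eqVneq (enorm z) 0.
  by rewrite z0 mulr0 (enorm_eq0 _ z0) mulmx0 enorm0.
have zp : 0 < enorm z by rewrite lt_def z0 enorm_ge0.
have H : S (enorm (A *m ((enorm z)^-1 *: z))).
  exists ((enorm z)^-1 *: z) => //=.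
  by rewrite enormZ ger0_norm ?invr_ge0 ?enorm_ge0 // mulVf.
have := sup_upper_bound hS H.
rewrite -scalemxAr enormZ ger0_norm ?invr_ge0 ?enorm_ge0 // => H2.
by rewrite -ler_pdivrMr // mulrC.
Qed.

Lemma sigma_min_bound {m n} (A : 'M[R]_(m, n)) c :
  sigma_min A * enorm c <= enorm (A^T *m c).
Proof.
set S := [set enorm (A^T *m y) | y in [set y : 'cV[R]_m | enorm y = 1]].
have lS : has_lbound S by exists 0 => x [y _ <-]; exact: enorm_ge0.
have [c0|c0] := eqVneq (enorm c) 0.
  by rewrite c0 mulr0 enorm_ge0.
have cp : 0 < enorm c by rewrite lt_def c0 enorm_ge0.
have H : S (enorm (A^T *m ((enorm c)^-1 *: c))).
  exists ((enorm c)^-1 *: c) => //=.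
  by rewrite enormZ ger0_norm ?invr_ge0 ?enorm_ge0 // mulVf.
have := ge_inf lS H.
rewrite -scalemxAr enormZ ger0_norm ?invr_ge0 ?enorm_ge0 // => H2.
by rewrite -ler_pdivlMr // mulrC.
Qed.

Lemma open_seg {n} (X : set 'cV[R]_n) y u : open X -> X y ->
  exists2 e : R, 0 < e & forall t, 0 < t < e -> X (y - t *: u).
Proof.
move=> oX Xy.
have H1 : nbhs y X by apply: open_nbhs_nbhs; split.
have H2 := (nbhs0P X y).1 H1.
have H3 := near0Z (- u) H2.
have [e /= e0 He] := (nbhs_ballP _ _).1 H3.
exists e => // t /andP[t0 te].
have := He t; rewrite -ball_normE /= sub0r normrN gtr0_norm // => /(_ te).
by rewrite scalerN.
Qed.


Lemma D_bound {n m} (r : 'cV[R]_n -> R) (X : set 'cV[R]_n) (Jk : 'M[R]_(m, n))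
  (xk gk v u : 'cV[R]_n) (alpha sb kgf kdr : R) :
  alg_convex_fun r -> open X -> X xk -> X (xk + (v + u)) ->
  (forall y w, X y -> subgrad r y w -> enorm w <= kdr) ->
  enorm gk <= kgf -> 0 < alpha -> sb <= 1 ->
  Jk *m u = 0 -> dotv v u = 0 ->
  (forall w, Jk *m w = 0 ->
     dotv gk u + (2 * alpha)^-1 * enorm u ^+ 2 + r (xk + v + u)
     <= dotv gk w + (2 * alpha)^-1 * enorm w ^+ 2 + r (xk + v + w)) ->
  dotv gk (v + u) + sb * enorm (v + u) ^+ 2 / alpha + r (xk + (v + u)) - r xk
  <= (kgf + kdr) * enorm v + sb * enorm v ^+ 2 / alpha.
Proof.
move=> conv oX Xx Xy Hdr Hg a0 sb1 Ju vu Hopt.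
set y := xk + (v + u).
have [e e0 He] := open_seg X y u oX Xy.
apply/ler_addgt0Pr => eps eps0.
set nu := enorm u ^+ 2.
set nv := enorm v ^+ 2.
have nu0 : 0 <= nu by rewrite /nu sqr_ge0.
set t := Num.min (e / 2) (Num.min (1 / 2) (eps * alpha / (nu + 1))).
have nu1 : 0 < nu + 1 by rewrite ltr_wpDl.
have t0 : 0 < t.
  by rewrite /t !lt_min !divr_gt0 ?mulr_gt0 ?ltr01 ?ltr0n.
have te : t < e.
  rewrite /t gt_min; apply/orP; left; rewrite ltr_pdivrMr ?ltr0n //.
  by rewrite ltr_pMr // ltr1n.
have t1 : t <= 1 / 2 by rewrite /t !ge_min lexx orbT.
have teps : t * nu <= eps * alpha.
  have : t <= eps * alpha / (nu + 1) by rewrite /t !ge_min lexx !orbT.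
  rewrite ler_pdivlMr // => H.
  apply: le_trans H; rewrite ler_pM2l // lerDl ler01 //.
set yt := y - t *: u.
have Xyt : X yt by apply: He; rewrite t0 te.
have [wt Hwt] := subgrad_exists r conv yt.
have wtb := Hdr _ _ Xyt Hwt.
set ia := (2 * alpha)^-1.
have ia0 : 0 < ia by rewrite invr_gt0 mulr_gt0 ?ltr0n.
have iaE : alpha^-1 = 2 * ia by rewrite /ia; field; rewrite gt_eqF.
have Jt : Jk *m ((1 - t) *: u) = 0 by rewrite -scalemxAr Ju scaler0.
have H1 := Hopt ((1 - t) *: u) Jt.
have Eyt : xk + v + (1 - t) *: u = yt.
  by rewrite /yt /y; apply/matrixP => i j; rewrite !mxE; ring.
rewrite Eyt dotvZr enormZ exprMn -/nu in H1.
have E1t : `|1 - t| ^+ 2 = (1 - t) ^+ 2 by rewrite real_normK ?num_real.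
rewrite E1t -/nu -(addrA xk v u) -/y in H1.
have H2 := Hwt xk.
have H3 := Hwt y.
have E2 : xk - yt = t *: u - v - u.
  by rewrite /yt /y; apply/matrixP => i j; rewrite !mxE; ring.
have E3 : y - yt = t *: u by rewrite /yt /y; apply/matrixP => i j; rewrite !mxE; ring.
rewrite E2 !dotvBr dotvZr in H2.
rewrite E3 dotvZr in H3.
set A := dotv wt v in H2.
set B := dotv wt u in H2 H3.
have HA : A <= kdr * enorm v.
  by apply: le_trans (CS wt v) _; rewrite ler_wpM2r ?enorm_ge0.
have Hgv : dotv gk v <= kgf * enorm v.
  by apply: le_trans (CS gk v) _; rewrite ler_wpM2r ?enorm_ge0.
have Es : enorm (v + u) ^+ 2 = nv + nu.
  by rewrite enorm_sq !(dotvDl, dotvDr) (dotvC u v) vu -!enorm_sq -/nv -/nu addr0 add0r.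
rewrite Es dotvDr -/y.
set gu := dotv gk u in H1 *.
set gv := dotv gk v in Hgv *.
have HB : B <= - gu + ia * (t - 2) * nu.
  rewrite -(ler_pM2l t0).
  have : t * B <= - t * gu + ia * (t ^+ 2 - 2 * t) * nu.
    have -> : ia * (t ^+ 2 - 2 * t) * nu = ia * ((1 - t) ^+ 2) * nu - ia * nu by ring.
    rewrite -/ia in H1; lra.
  by move=> H; apply: (le_trans H); rewrite le_eqVlt; apply/orP; left; apply/eqP; ring.
have t1' : 0 <= 1 - t by lra.
have HB2 := ler_wpM2l t1' HB.
have Hia : ia * nu * t <= eps / 2.
  have -> : ia * nu * t = (t * nu) / (2 * alpha) by rewrite /ia; ring.
  have a2 : 0 < 2 * alpha by rewrite mulr_gt0 ?ltr0n.
  rewrite ler_pdivrMr //.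
  have -> : eps / 2 * (2 * alpha) = eps * alpha by field.
  exact: teps.
rewrite iaE.
have H2' : r yt + (t * B - A - B) <= r xk by [].
rewrite -/ia in H1.
have Hsb : sb * nu * (2 * ia) <= nu * (2 * ia).
  by rewrite -mulrA -[X in _ <= X]mul1r ler_wpM2r // mulr_ge0 // mulr_ge0 ?ler0n // ltW.
lra.
Qed.

End Lin.

Theorem lemma3p13 (R : realType) (n m : nat) (Hmn : (m <= n)%N)
  (f r : 'cV[R]_n -> R) (g : 'cV[R]_n -> 'cV[R]_n)
  (c : 'cV[R]_n -> 'cV[R]_m) (J : 'cV[R]_n -> 'M[R]_(m, n))
  (* f, c continuously differentiable with gradient g and Jacobian J *)
  (Hf : forall x, differentiable f x /\ 'd f x = (fun h => dotv (g x) h) :> (_ -> _))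
  (Hg : continuous g)
  (Hc : forall x, differentiable c x /\ 'd c x = (fun h => J x *m h) :> (_ -> _))
  (HJ : continuous J)
  (* r convex, nonnegative *)
  (Hr0 : forall x, 0 <= r x) (Hrconv : alg_convex_fun r)
  (* algorithm constants *)
  (kappa_v sigma_c eps_tau xi eta sigma_u alpha0 tau_m1 : R)
  (Hkv : 0 < kappa_v) (Hsc : 0 < sigma_c < 1) (Het : 0 < eps_tau < 1)
  (Hxi : 0 < xi < 1) (Heta : 0 < eta < 1) (Hsu : 0 < sigma_u <= 2^-1)
  (Ha0 : 0 < alpha0) (Htm1 : 0 < tau_m1)
  (* the iterates of a non-terminating run *)
  (x : nat -> 'cV[R]_n) (alpha tau : nat -> R) (v u : nat -> 'cV[R]_n)
  (Halpha0 : alpha 0%N = alpha0)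
  (Hrun : algorithm_run f r g c J kappa_v sigma_c eps_tau xi eta sigma_u tau_m1
            x alpha tau v u)
  (* standing assumption *)
  (X : set 'cV[R]_n) (kappa_gf kappa_c kappa_gc kappa_dr : R)
  (Hkgf : 0 < kappa_gf) (Hkc : 0 < kappa_c) (Hkgc : 0 < kappa_gc) (Hkdr : 0 < kappa_dr)
  (HXopen : open X) (HXconv : alg_convex_set X)
  (HXit : forall k, X (x k) /\ X (x k + (v k + u k)))
  (Hfbd : exists flow : R, forall y, X y -> flow <= f y)
  (Hgbd : forall y, X y -> enorm (g y) <= kappa_gf)
  (Hcbd : forall y, X y -> enorm (c y) <= kappa_c)
  (HJbd : forall y, X y -> specnorm (J y) <= kappa_gc)
  (Hdrbd : forall y w, X y -> subgrad r y w -> enorm w <= kappa_dr)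
  (HgLip : alg_lipschitz_on X g enorm)
  (HJLip : alg_lipschitz_on X J specnorm)
  (* uniform lower bound on the smallest singular value of J_k *)
  (smin : R) (Hsmin : 0 < smin) (Hsig : forall k, smin <= sigma_min (J (x k))) :
  let sigma_u_bar := sigma_u + 2^-1 in
  let K := 2 * kappa_v * kappa_gc *
           (kappa_gf + kappa_dr + sigma_u_bar * kappa_c * kappa_v * kappa_gc) in
  let tau_min_trial := Num.min ((1 - sigma_c) * kappa_v * smin ^+ 2 / K)
                               ((1 - sigma_c) * (smin / kappa_gc) ^+ 2 / (K * alpha0)) in
  let tau_min := Num.min (tau 0%N) ((1 - eps_tau) * tau_min_trial) in
  (forall k, (tau_min_trial%:E <=
     tau_trial_of r sigma_c sigma_u_bar (alpha k) (x k) (g (x k)) (v k)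
       (v k + u k) (c (x k)) (J (x k)))%E) /\
  (forall k, tau_min <= tau k).
Proof.
move=> sb K tmt tmin.
have sb1 : sb <= 1 by rewrite /sb; case/andP: Hsu => _ H; lra.
have sb0 : 0 < sb by rewrite /sb; case/andP: Hsu => H _; lra.
have Halpha : forall k, 0 < alpha k <= alpha0.
  elim=> [|k /andP[IH1 IH2]]; first by rewrite Halpha0 Ha0 lexx.
  have HR := Hrun k; cbv zeta in HR.
  case: HR => _ [_ [_ [_ [_ Hst]]]].
  case/andP: Hxi => xi0 xi1.
  move: Hst; case: ifP => _ [_ ->]; first by rewrite IH1 IH2.
  rewrite mulr_gt0 //=; apply: le_trans IH2; rewrite ler_piMl // ltW //.
case/andP: Hsc => sc0 sc1.
have W0 : 0 < kappa_gf + kappa_dr + sb * kappa_c * kappa_v * kappa_gc.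
  by rewrite !addr_gt0 // !mulr_gt0.
have Kpos : 0 < K by rewrite /K !mulr_gt0 // ltr0n.
have tmt0 : 0 < tmt.
  by rewrite /tmt lt_min !divr_gt0 ?mulr_gt0 ?exprn_gt0 ?divr_gt0 ?subr_gt0 ?invr_gt0.
have P1 : forall k, (tmt%:E <=
     tau_trial_of r sigma_c sb (alpha k) (x k) (g (x k)) (v k)
       (v k + u k) (c (x k)) (J (x k)))%E.
  move=> k.
  have HR := Hrun k; cbv zeta in HR.
  case: HR => Hs1 [Hs1' [[Ju Hopt] [Hs [Htau Hst]]]].
  case: (HXit k) => Xx Xy.
  case/andP: (Halpha k) => ak0 ak1.
  rewrite /tau_trial_of /D_k /=.
  case: ifP => HD; first by rewrite leey.
  move/negbT: HD; rewrite -ltNge => HD.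
  have Hdb := fun vu => @D_bound R n m r X (J (x k)) (x k) (g (x k)) (v k) (u k) (alpha k) sb kappa_gf kappa_dr Hrconv HXopen Xx Xy
     Hdrbd (Hgbd _ Xx) ak0 sb1 Ju vu Hopt.
  have [Jc0|Jc0] := eqVneq ((J (x k))^T *m c (x k)) 0.
    case: (Hs1' Jc0) => v0 c0.
    have vu : dotv (v k) (u k) = 0 by rewrite v0 dotv0l.
    have H := Hdb vu.
    have Hz : (kappa_gf + kappa_dr) * enorm (v k) + sb * enorm (v k) ^+ 2 / alpha k = 0.
      by rewrite v0 enorm0 expr0n /= !mulr0 !mul0r addr0.
    by rewrite Hz in H; rewrite ltNge H in HD.
  case: (Hs1 Jc0) => [[y Hy] [Hvb [bc [/andP[bc0 bc1] [Hmin Hcv]]]]].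
  have vu : dotv (v k) (u k) = 0 by rewrite Hy dotv_mx Ju dotv0r.
  have HDb := Hdb vu.
  rewrite lee_fin ler_pdivlMr //.
  set Jx := J (x k) in Hvb Hcv Hmin Jc0 HDb HD *.
  set cx := c (x k) in Hvb Hcv Hmin Jc0 *.
  set W := kappa_gf + kappa_dr + sb * kappa_c * kappa_v * kappa_gc in W0.
  have cne : cx != 0 by apply: contraNneq Jc0 => ->; rewrite mulmx0.
  set C := enorm cx.
  have Cpos : 0 < C.
    rewrite lt_def enorm_ge0 andbT; apply: contra cne => /eqP H.
    by rewrite (enorm_eq0 _ H).
  set a := enorm (Jx^T *m cx) in Hvb *.
  have apos : 0 < a.
    rewrite lt_def enorm_ge0 andbT; apply: contra Jc0 => /eqP H.
    by rewrite (enorm_eq0 _ H).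
  set Mv := Jx *m Jx^T *m cx in Hmin *.
  have FM : enorm Mv <= kappa_gc * a.
    rewrite /Mv -mulmxA; apply: le_trans (specnorm_bound _ _) _.
    by rewrite ler_wpM2r ?enorm_ge0 //; exact: HJbd.
  have Fa2 : a ^+ 2 = dotv cx Mv by rewrite /a enorm_sq dotv_mx /Mv mulmxA.
  have Fa : a <= kappa_gc * C.
    have H : a * a <= (kappa_gc * C) * a.
      rewrite -expr2 Fa2; apply: le_trans (CS _ _) _.
      rewrite -/C (mulrC kappa_gc) -mulrA ler_wpM2l ?enorm_ge0 //.
    by rewrite -(ler_pM2r apos).
  have Fs : smin * C <= a.
    exact: le_trans (ler_wpM2r (enorm_ge0 _) (Hsig k)) (sigma_min_bound _ _).
  have FC : C <= kappa_c := Hcbd _ Xx.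
  have skg : smin <= kappa_gc by rewrite -(ler_pM2r Cpos); apply: le_trans Fs Fa.
  have aK : a <= kappa_gc * kappa_c := le_trans Fa (ler_wpM2l (ltW Hkgc) FC).
  set cc := cx - bc *: Mv in Hmin.
  have Ecv : cx + Jx *m (- bc *: (Jx^T *m cx)) = cc by rewrite -scalemxAr mulmxA scaleNr.
  rewrite Ecv in Hcv.
  have av0 : 0 <= kappa_v * alpha k by rewrite mulr_ge0 ?ltW.
  have Hm0 := Hmin 0 (ltac:(by rewrite lexx av0)).
  rewrite scale0r subr0 ler_pM2l ?invr_gt0 ?ltr0n // in Hm0.
  set b' := Num.min (kappa_v * alpha k) (kappa_gc ^+ 2)^-1.
  have b'0 : 0 <= b' by rewrite le_min av0 invr_ge0 sqr_ge0.
  have b'1 : b' <= kappa_v * alpha k by rewrite ge_min lexx.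
  have b'2 : b' * kappa_gc ^+ 2 <= 1.
    have : b' <= (kappa_gc ^+ 2)^-1 by rewrite ge_min lexx orbT.
    by rewrite -ler_pdivlMr ?exprn_gt0 // mul1r.
  have Hmb := Hmin b' (ltac:(by rewrite b'0 b'1)).
  rewrite ler_pM2l ?invr_gt0 ?ltr0n // in Hmb.
  have Eb : enorm (cx - b' *: Mv) ^+ 2
      = C ^+ 2 - 2 * b' * a ^+ 2 + b' ^+ 2 * enorm Mv ^+ 2.
    rewrite Fa2 /C !enorm_sq !(dotvBl, dotvBr, dotvZl, dotvZr) (dotvC Mv cx); ring.
  have FM2 : enorm Mv ^+ 2 <= kappa_gc ^+ 2 * a ^+ 2.
    have := enorm_ge0 Mv; nra.
  have T1 : b' ^+ 2 * enorm Mv ^+ 2 <= b' * a ^+ 2.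
    apply: le_trans (ler_wpM2l (sqr_ge0 b') FM2) _.
    have -> : b' ^+ 2 * (kappa_gc ^+ 2 * a ^+ 2) = b' * ((b' * kappa_gc ^+ 2) * a ^+ 2) by ring.
    rewrite ler_wpM2l // -[X in _ <= X]mul1r ler_wpM2r ?sqr_ge0 //.
  set ncc := enorm cc in Hm0 Hmb Hcv.
  have ncc0 : 0 <= ncc by exact: enorm_ge0.
  have ncc2 : ncc ^+ 2 <= C ^+ 2 - b' * a ^+ 2 by lra.
  have nccC : ncc <= C by have := enorm_ge0 cx; nra.
  have Key : b' * a ^+ 2 <= 2 * C * (C - ncc) by nra.
  have G1 := ler_wpM2l (ltW tmt0) HDb.
  apply: le_trans G1 _.
  set ev := enorm (v k) in Hvb *.
  have ev0 : 0 <= ev by exact: enorm_ge0.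
  have e2 : ev ^+ 2 <= (kappa_v * alpha k * a) ^+ 2 by nra.
  have Bd1 : sb * ev ^+ 2 / alpha k <= alpha k * a * kappa_v * (sb * kappa_c * kappa_v * kappa_gc).
    rewrite ler_pdivrMr //.
    apply: le_trans (ler_wpM2l (ltW sb0) e2) _.
    have -> : sb * (kappa_v * alpha k * a) ^+ 2 = (sb * kappa_v ^+ 2 * alpha k ^+ 2 * a) * a by ring.
    have -> : alpha k * a * kappa_v * (sb * kappa_c * kappa_v * kappa_gc) * alpha k
       = (sb * kappa_v ^+ 2 * alpha k ^+ 2 * a) * (kappa_gc * kappa_c) by ring.
    apply: ler_wpM2l => //.
    by rewrite !mulr_ge0 ?ltW ?sqr_ge0.
  have Bd2 : (kappa_gf + kappa_dr) * ev <= alpha k * a * kappa_v * (kappa_gf + kappa_dr).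
    apply: le_trans (ler_wpM2l _ Hvb) _; first by rewrite addr_ge0 ?ltW.
    by rewrite le_eqVlt; apply/orP; left; apply/eqP; ring.
  have HBd : (kappa_gf + kappa_dr) * ev + sb * ev ^+ 2 / alpha k <= a * (alpha k * kappa_v * W).
    have -> : a * (alpha k * kappa_v * W) = alpha k * a * kappa_v * (kappa_gf + kappa_dr)
       + alpha k * a * kappa_v * (sb * kappa_c * kappa_v * kappa_gc) by rewrite /W; ring.
    exact: lerD.
  set Z := tmt * (alpha k * kappa_v * W).
  have F1 : tmt * ((kappa_gf + kappa_dr) * ev + sb * ev ^+ 2 / alpha k) <= a * Z.
    apply: le_trans (ler_wpM2l (ltW tmt0) HBd) _.
    by rewrite le_eqVlt; apply/orP; left; apply/eqP; rewrite /Z; ring.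
  have sc' : 0 <= 1 - sigma_c by rewrite subr_ge0 ltW.
  have S3 : 2 * Z <= (1 - sigma_c) * b' * smin.
    rewrite -(ler_pM2r Hkgc).
    have -> : 2 * Z * kappa_gc = (tmt * K) * alpha k by rewrite /Z /K /W; ring.
    have [Hb|Hb] := leP (kappa_v * alpha k) (kappa_gc ^+ 2)^-1.
    - have -> : b' = kappa_v * alpha k by rewrite /b' (min_idPl Hb).
      have t1 : tmt * K <= (1 - sigma_c) * kappa_v * smin ^+ 2.
        have : tmt <= (1 - sigma_c) * kappa_v * smin ^+ 2 / K by rewrite /tmt ge_min lexx.
        by rewrite ler_pdivlMr.
      apply: le_trans (ler_wpM2r (ltW ak0) t1) _.
      have -> : (1 - sigma_c) * (kappa_v * alpha k) * smin * kappa_gc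
        = ((1 - sigma_c) * kappa_v * smin * alpha k) * kappa_gc by ring.
      have -> : (1 - sigma_c) * kappa_v * smin ^+ 2 * alpha k
        = ((1 - sigma_c) * kappa_v * smin * alpha k) * smin by ring.
      by apply: (ler_wpM2l _ skg); rewrite !mulr_ge0 // ?ltW.
    - have -> : b' = (kappa_gc ^+ 2)^-1 by rewrite /b' (min_idPr (ltW Hb)).
      have t2 : tmt * (K * alpha0) <= (1 - sigma_c) * (smin / kappa_gc) ^+ 2.
        have : tmt <= (1 - sigma_c) * (smin / kappa_gc) ^+ 2 / (K * alpha0).
          by rewrite /tmt ge_min lexx orbT.
        by rewrite ler_pdivlMr // mulr_gt0.
      apply: le_trans (_ : _ <= tmt * (K * alpha0)) _.
        rewrite -mulrA; apply: (ler_wpM2l (ltW tmt0)); exact: (ler_wpM2l (ltW Kpos) ak1).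
      apply: le_trans t2 _.
      have -> : (1 - sigma_c) * (smin / kappa_gc) ^+ 2
        = ((1 - sigma_c) * (kappa_gc ^+ 2)^-1 * smin) * smin by rewrite expr_div_n; ring.
      apply: (ler_wpM2l _ skg).
      have : 0 <= (kappa_gc ^+ 2)^-1 by rewrite invr_ge0 sqr_ge0.
      have := ltW Hkgc; have := ltW Hsmin; move=> *; rewrite !mulr_ge0 //.
  have F2 : 2 * C * (a * Z) <= (1 - sigma_c) * b' * a * (smin * C).
    have -> : 2 * C * (a * Z) = (C * a) * (2 * Z) by ring.
    have -> : (1 - sigma_c) * b' * a * (smin * C) = (C * a) * ((1 - sigma_c) * b' * smin) by ring.
    by apply: (ler_wpM2l _ S3); rewrite mulr_ge0 ?ltW.
  have F3 : (1 - sigma_c) * b' * a * (smin * C) <= (1 - sigma_c) * b' * a * a.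
    by apply: (ler_wpM2l _ Fs); rewrite !mulr_ge0 // ?ltW.
  have F4 : (1 - sigma_c) * (b' * a ^+ 2) <= (1 - sigma_c) * (2 * C * (C - ncc)).
    exact: ler_wpM2l.
  have F5 : a * Z <= (1 - sigma_c) * (C - ncc).
    rewrite -(ler_pM2l (_ : 0 < 2 * C)); last by rewrite mulr_gt0.
    apply: le_trans F2 _; apply: le_trans F3 _.
    have -> : (1 - sigma_c) * b' * a * a = (1 - sigma_c) * (b' * a ^+ 2) by ring.
    apply: le_trans F4 _.
    by rewrite le_eqVlt; apply/orP; left; apply/eqP; ring.
  apply: le_trans F1 _; apply: le_trans F5 _.
  by apply: ler_wpM2l => //; rewrite lerB.
split => //.
case/andP: Het => et0 et1.
have tmin_le : tmin <= (1 - eps_tau) * tmt by rewrite /tmin ge_min lexx orbT.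
have tmin_le' : (1 - eps_tau) * tmt <= tmt.
  rewrite ler_piMl ?ltW //; lra.
elim=> [|k IH]; first by rewrite /tmin ge_min lexx.
have HR := Hrun k.+1; cbv zeta in HR.
case: HR => _ [_ [_ [_ [Htau _]]]].
rewrite Htau /tau_update.
have HP := P1 k.+1.
move: HP.
set tt := tau_trial_of _ _ _ _ _ _ _ _ _ _.
case: ifP => // Hlt.
move: Hlt; case: tt => [t| |] //= Hlt.
  rewrite lee_fin => Htt.
  move/negbT: Hlt; rewrite lee_fin -ltNge => Hlt.
  rewrite le_min; apply/andP; split.
    apply: le_trans tmin_le _; rewrite ler_wpM2l ?subr_ge0 ?ltW //.
    exact: (le_lt_trans Htt Hlt).
  exact: le_trans tmin_le (le_trans tmin_le' Htt).
by rewrite leey in Hlt.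
Qed.
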